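(* Let $n\ge 2$, and let $S$ be a semitransitive subsemigroup of $\mathcal{I}_n\setminus\mathcal{S}_n$ with $|S|\le 2n$. Then $S$ contains exactly two non-zero idempotents. Their domains are disjoint, and the union of their domains is $X=\{1,\dots,n\}$.
   Context: $\mathcal{I}_n$ denotes the symmetric inverse semigroup of all partial injective maps of $X=\{1,\dots,n\}$ to itself (including the empty map, denoted $0$), with maps written on the right ($x\varphi$) and composed left to right ($x(\varphi\psi)=(x\varphi)\psi$). $\mathcal{S}_n$ is the symmetric group of all permutations of $X$, so $\mathcal{I}_n\setminus\mathcal{S}_n$ is the set of non-invertible partial injections. A semigroup $S$ of partial transformations of $X$ is semitransitive if for all $x,y\in X$ there is $\varphi\in S$ with $x\varphi=y$ or $y\varphi=x$. An idempotent is non-zero if it is not the empty map. *)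

(* Defs.v *)
(* X = {1..n} is modelled by 'I_n = {0..n-1}. *)
From mathcomp Require Import all_boot.
Set Implicit Arguments. Unset Strict Implicit. Unset Printing Implicit Defensive.

(* partial maps of 'I_n: x |-> None means x is outside the domain *)
Definition pfun (n : nat) := {ffun 'I_n -> option 'I_n}.

Definition pinj n (f : pfun n) : bool :=
  [forall x, forall y, ((f x != None) && (f x == f y)) ==> (x == y)].

Definition pdom n (f : pfun n) : {set 'I_n} := [set x | f x != None].

(* composition, maps written on the right: x (f ; g) = (x f) g *)
Definition pcomp n (f g : pfun n) : pfun n := [ffun x => obind g (f x)].

Definition pzero (n : nat) : pfun n := [ffun _ => None].

Definition is_perm n (f : pfun n) : bool := pinj f && (pdom f == setT).

Definition pidem n (e : pfun n) : bool := pcomp e e == e.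

Definition subsemigroup_noninv n (S : {set pfun n}) : Prop :=
  (forall f, f \in S -> pinj f && ~~ is_perm f) /\
  (forall f g, f \in S -> g \in S -> pcomp f g \in S).

Definition semitransitive n (S : {set pfun n}) : Prop :=
  forall x y : 'I_n, exists2 phi, phi \in S & (phi x = Some y \/ phi y = Some x).

(* Main.v *)
Require Import Defs.
From mathcomp Require Import all_boot.
From Stdlib Require Import Lia.
Set Implicit Arguments. Unset Strict Implicit. Unset Printing Implicit Defensive.

Notation pc := Defs.pcomp.

Section Basic.
Variable n : nat.
Implicit Types f g h e : pfun n.

Lemma pcE f g x : pc f g x = obind g (f x).
Proof. by rewrite /Defs.pcomp ffunE. Qed.

Lemma pcA f g h : pc (pc f g) h = pc f (pc g h).
Proof. apply/ffunP=> x; rewrite !pcE; by case: (f x) => //= y; rewrite pcE. Qed.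

Lemma in_pdom f x : (x \in pdom f) = (f x != None).
Proof. by rewrite inE. Qed.

Lemma pinjP f x y : pinj f -> f x = f y -> f x != None -> x = y.
Proof.
move=> /forallP /(_ x) /forallP /(_ y) H Exy Nx.
by apply/eqP; apply: (implyP H); rewrite Nx Exy eqxx.
Qed.

Definition pid f := forall x y, f x = Some y -> y = x.

Lemma idem_pid e : pinj e -> pidem e -> pid e.
Proof.
move=> Hi /eqP He x y Exy.
have : pc e e x = e x by rewrite He.
rewrite pcE Exy /= => Ey.
by apply: (pinjP Hi); rewrite ?Ey ?Exy.
Qed.

Lemma pid_idem e : pid e -> pidem e.
Proof.
move=> He; apply/eqP/ffunP=> x; rewrite pcE.
case E: (e x) => [y|] //=; move: (He _ _ E) => Hy; subst y; exact E.
Qed.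

Lemma pid_comp e f : pid e -> pid f -> pid (pc e f).
Proof.
move=> He Hf x y; rewrite pcE; case E: (e x) => [z|] //= /Hf ->.
exact: He.
Qed.

Lemma pid_eq e f : pid e -> pid f -> pdom e = pdom f -> e = f.
Proof.
move=> He Hf /setP D; apply/ffunP=> x; move: (D x); rewrite !in_pdom.
case Ex: (e x) => [y|]; case Fx: (f x) => [z|] //= _.
by rewrite (He _ _ Ex) (Hf _ _ Fx).
Qed.

Lemma pid_in e x : pid e -> x \in pdom e -> e x = Some x.
Proof. by move=> He; rewrite in_pdom; case E: (e x) => [y|] //= _; rewrite (He _ _ E). Qed.

Lemma total_perm f : pinj f -> pdom f = setT -> is_perm f.
Proof. by move=> Hi Hd; rewrite /is_perm Hi Hd eqxx. Qed.

Lemma pzeroP f : (forall x, f x = None) -> f = pzero n.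
Proof. by move=> H; apply/ffunP=> x; rewrite H ffunE. Qed.

End Basic.

Lemma extreme (T : finType) (r : rel T) (K : {set T}) :
  (forall x y, x \in K -> y \in K -> r x y || r y x) ->
  (forall x y z, r x y -> r y z -> r x z) ->
  K != set0 -> exists2 b, b \in K & forall y, y \in K -> r b y.
Proof.
move=> Htot Htr /set0Pn [b0 Hb0].
case: (@arg_maxnP _ b0 (fun b => b \in K) (fun b => #|[set y in K | r b y]|) Hb0)
  => b Hb Hmax.
exists b => // y Hy; apply/negPn/negP=> Hby.
have Hyb : r y b by move: (Htot b y Hb Hy); rewrite (negbTE Hby).
have Hpr : [set z in K | r b z] \proper [set z in K | r y z].
  apply/properP; split.
    apply/subsetP=> z; rewrite !inE => /andP [-> Hz] /=; exact: Htr Hyb Hz.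
  exists y; rewrite !inE Hy /=; last exact: Hby.
  by move: (Htot y y Hy Hy); rewrite orbb.
have H1 := Hmax y Hy; have H2 := proper_card Hpr; simpl in H1.
by move: H1; rewrite /geq leqNgt H2.
Qed.


Section WithS.
Variable n : nat.
Variable S : {set pfun n}.
Hypothesis HS : subsemigroup_noninv S.
Hypothesis Ht : semitransitive S.
Implicit Types f g h e : pfun n.

Lemma S_inj f : f \in S -> pinj f.
Proof. by case: HS => H _ /H /andP []. Qed.
Lemma S_np f : f \in S -> ~~ is_perm f.
Proof. by case: HS => H _ /H /andP []. Qed.
Lemma S_comp f g : f \in S -> g \in S -> pc f g \in S.
Proof. by case: HS => _ H; apply: H. Qed.

Definition pw f k := iter k (pc f) f.

Lemma pwS f k : pw f k.+1 = pc f (pw f k).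
Proof. by []. Qed.

Lemma pw_add f a b : pc (pw f a) (pw f b) = pw f (a + b).+1.
Proof. elim: a => [|a IH] //=. by rewrite pcA IH. Qed.

Lemma pw_in f k : f \in S -> pw f k \in S.
Proof. move=> Hf; elim: k => [|k IH] //=; exact: S_comp. Qed.

Lemma pw_fix f k x : f x = Some x -> pw f k x = Some x.
Proof. move=> Hx; elim: k => [|k IH] //=; by rewrite pcE Hx. Qed.

Lemma pw_idem f : exists k, pc (pw f k) (pw f k) = pw f k.
Proof.
pose N := #|{: pfun n}|.
pose F := fun i : 'I_N.+1 => pw f i.
have [/existsP [i /existsP [j /andP [Hij /eqP Eij]]]|Hno] :=
  boolP [exists i, exists j, (i != j) && (F i == F j)]; last first.
  have Hinj : injective F.
    move=> i j Eij; apply/eqP; apply/negPn/negP => Hne; move/negP: Hno; apply.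
    by apply/existsP; exists i; apply/existsP; exists j; rewrite Hne Eij eqxx.
  by move: (leq_card F Hinj); rewrite card_ord ltnn.
have {Hij Eij}H: exists i j, i < j /\ pw f i = pw f j.
  case: (ltngtP i j) => H.
  - by exists i, j.
  - by exists j, i.
  - by move: Hij; rewrite (val_inj H) eqxx.
clear i j; move: H => [i [j [Hij Eij]]].
set p := j - i.
have Hp : 0 < p by rewrite subn_gt0.
have step : forall d, pw f (i + d + p) = pw f (i + d).
  elim=> [|d IH]; first by rewrite addn0 subnKC ?Eij // ltnW.
  by rewrite addnS addSn pwS IH.
have mult : forall d c, pw f (i + d + c * p) = pw f (i + d).
  move=> d; elim=> [|c IH]; first by rewrite mul0n addn0.
  have -> : i + d + c.+1 * p = i + (d + c * p) + p.
    by rewrite -!plusE -!multE; lia.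
  by rewrite step addnA IH.
set k := (i.+1 * p).-1.
have Hk1 : k.+1 = i.+1 * p by rewrite prednK // muln_gt0.
have Hik : i <= k by rewrite -ltnS Hk1 leq_pmulr.
exists k; rewrite pw_add -addnS Hk1.
by rewrite -(subnKC Hik) mult.
Qed.

Lemma exists_idem x : exists e, [&& e \in S, pidem e & e x == Some x].
Proof.
have [phi Hphi Hx] := Ht x x.
have Hx' : phi x = Some x by case: Hx.
have [k Hk] := pw_idem phi.
exists (pw phi k); rewrite pw_in //=; apply/andP; split; first by apply/eqP.
by rewrite pw_fix.
Qed.

Definition reachb x y := [exists f, (f \in S) && (f x == Some y)].

Lemma reachP x y : reflect (exists2 f, f \in S & f x = Some y) (reachb x y).
Proof.
apply: (iffP existsP) => [[f /andP [Hf /eqP E]]|[f Hf E]]; exists f => //.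
by rewrite Hf E eqxx.
Qed.

Lemma reach_tot x y : reachb x y || reachb y x.
Proof.
have [f Hf [E|E]] := Ht x y.
  by apply/orP; left; apply/reachP; exists f.
by apply/orP; right; apply/reachP; exists f.
Qed.

Lemma reach_refl x : reachb x x.
Proof. by have := reach_tot x x; rewrite orbb. Qed.

Lemma reach_trans x y z : reachb x y -> reachb y z -> reachb x z.
Proof.
move=> /reachP [f Hf E1] /reachP [g Hg E2]; apply/reachP.
by exists (pc f g); [apply: S_comp | rewrite pcE E1].
Qed.

Definition Pid x e := [&& e \in S, pidem e & e x == Some x].

Lemma Pid_pid x e : Pid x e -> pid e.
Proof. by case/and3P=> Hs Hi _; apply: idem_pid => //; apply: S_inj. Qed.

Lemma Emin_ex x : exists e, Pid x e && [forall f, Pid x f ==> (#|pdom e| <= #|pdom f|)].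
Proof.
have [e0 He0] := exists_idem x.
case: (@arg_minnP _ e0 (Pid x) (fun e : pfun n => #|pdom e|) He0) => e He Hmin.
exists e; rewrite He /=; apply/forallP=> f; apply/implyP; exact: Hmin.
Qed.

Definition E x := xchoose (Emin_ex x).
Definition Dof x := pdom (E x).

Lemma E_Pid x : Pid x (E x).
Proof. by case/andP: (xchooseP (Emin_ex x)). Qed.

Lemma E_min x f : Pid x f -> #|pdom (E x)| <= #|pdom f|.
Proof. by case/andP: (xchooseP (Emin_ex x)) => _ /forallP H /(implyP (H f)). Qed.

Lemma E_S x : E x \in S.  Proof. by case/and3P: (E_Pid x). Qed.
Lemma E_pid x : pid (E x).  Proof. exact: (Pid_pid (E_Pid x)). Qed.
Lemma E_x x : E x x = Some x.  Proof. by case/and3P: (E_Pid x) => _ _ /eqP. Qed.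
Lemma Dof_x x : x \in Dof x.  Proof. by rewrite /Dof in_pdom E_x. Qed.

Lemma Dof_sub x f : f \in S -> pid f -> f x != None -> Dof x \subset pdom f.
Proof.
move=> Hf Hpf Hfx.
set g := pc (E x) f.
have Hg : pid g by apply: pid_comp => //; apply: E_pid.
have Hgx : g x = Some x by rewrite /g pcE E_x /=; apply: pid_in; rewrite ?in_pdom.
have Pg : Pid x g by rewrite /Pid S_comp ?E_S //= pid_idem //= Hgx eqxx.
have Hsub : pdom g \subset Dof x.
  apply/subsetP=> z; rewrite /Dof !in_pdom /g pcE; by case: (E x z).
have Heq : pdom g = Dof x.
  by apply/eqP; rewrite eqEcard Hsub /= E_min.
apply/subsetP=> z; rewrite -Heq !in_pdom /g pcE.
case E1: (E x z) => [w|] //=; by rewrite (E_pid E1).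
Qed.

Lemma Dof_mono a x : a \in Dof x -> Dof a \subset Dof x.
Proof. move=> Ha; apply: Dof_sub; [exact: E_S | exact: E_pid | by move: Ha; rewrite /Dof in_pdom]. Qed.

Lemma Dof_neqT x : Dof x != setT.
Proof.
apply/negP=> /eqP H; move: (S_np (E_S x)); rewrite total_perm //.
exact: S_inj (E_S x).
Qed.

Lemma pzero_in (x0 : 'I_n) : pzero n \in S.
Proof.
have [phi0 Hphi0 _] := Ht x0 x0.
case: (@arg_minnP _ phi0 (fun f => f \in S) (fun e : pfun n => #|pdom e|) Hphi0)
  => psi Hpsi Hmin.
have [Hz|/negP Hnz] := boolP (psi == pzero n); first by rewrite -(eqP Hz).
have [x1 Hx1] : exists x1, psi x1 != None.
  case: (boolP [exists x, psi x != None]) => [/existsP //|H].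
  exfalso; apply: Hnz; apply/eqP/pzeroP=> z.
  by apply/eqP; apply/negPn/negP=> Hz; move/negP: H; apply; apply/existsP; exists z.
case Ey0: (psi x1) Hx1 => [y0|] // _.
have H1 : forall a, a \in S -> a y0 != None.
  move=> a Ha; set g := pc psi a.
  have Hsub : pdom g \subset pdom psi.
    by apply/subsetP=> z; rewrite !in_pdom /g pcE; case: (psi z).
  have Heq : pdom g = pdom psi.
    by apply/eqP; rewrite eqEcard Hsub /= Hmin //; apply: S_comp.
  have : x1 \in pdom g by rewrite Heq in_pdom Ey0.
  by rewrite in_pdom /g pcE Ey0.
pose T := [set t | [forall a, (a \in S) ==> (a t != None)]].
have inT : forall t, (t \in T) = [forall a, (a \in S) ==> (a t != None)].
  by move=> t; rewrite inE.
have Hy0 : y0 \in T by rewrite inT; apply/forallP=> a; apply/implyP; exact: H1.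
have HT : forall t a t', t \in T -> a \in S -> a t = Some t' -> t' \in T.
  move=> t a t' Ht' Ha Eat; rewrite inT; apply/forallP=> b; apply/implyP=> Hb.
  move: Ht'; rewrite inT => /forallP /(_ (pc a b)) /implyP; rewrite S_comp //.
  by rewrite pcE Eat /=; apply.
have HTa : forall t a, t \in T -> a \in S -> a t != None.
  by move=> t a; rewrite inT => /forallP /(_ a) /implyP.
have [u Hu] : exists u, u \notin T.
  case: (boolP [exists u, u \notin T]) => [/existsP //|H].
  have HTT : T = setT.
    apply/setP=> z; rewrite [RHS]inE; apply/negPn/negP=> Hz; move/negP: H; apply.
    by apply/existsP; exists z.
  move: (S_np Hpsi); rewrite total_perm //; first exact: S_inj.
  by apply/setP=> z; rewrite in_pdom inE HTa // HTT.
have [phi Hphi Hor] := Ht y0 u.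
case: Hor => Hphi_u.
  by move: Hu; rewrite (HT _ _ _ Hy0 Hphi Hphi_u).
pose g := fun t => odflt t (phi t).
have Hg : forall t, t \in T -> phi t = Some (g t).
  by move=> t Ht'; rewrite /g; move: (HTa _ _ Ht' Hphi); case: (phi t).
have ginj : {in T &, injective g}.
  move=> t1 t2 H1' H2' Eg; apply: (pinjP (S_inj Hphi)); rewrite ?Hg ?Eg //.
have gsub : [set g t | t in T] \subset T.
  apply/subsetP=> z /imsetP [t Ht' ->]; exact: (HT _ _ _ Ht' Hphi (Hg _ Ht')).
have gT : [set g t | t in T] = T.
  by apply/eqP; rewrite eqEcard gsub (card_in_imset ginj) leqnn.
move: Hy0; rewrite -gT => /imsetP [t Ht' Et].
have : t = u.
  apply: (pinjP (S_inj Hphi)); first by rewrite Hg // -Et Hphi_u.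
  by rewrite Hg.
by move=> Etu; move: Hu; rewrite -Etu Ht'.
Qed.

Definition cls (psi : pfun n) (D D' : {set 'I_n}) : Prop :=
  [/\ (forall z w, psi z = Some w -> z \in D /\ w \in D'),
      (exists z w, psi z = Some w /\ Dof z = D) &
      (exists z w, psi z = Some w /\ Dof w = D')].

Lemma cls_uniq psi D1 D1' D2 D2' :
  cls psi D1 D1' -> cls psi D2 D2' -> D1 = D2 /\ D1' = D2'.
Proof.
case=> H1 [z1 [w1 [E1 F1]]] [u1 [v1 [G1 K1]]].
case=> H2 [z2 [w2 [E2 F2]]] [u2 [v2 [G2 K2]]].
split; apply/eqP; rewrite eqEsubset; apply/andP; split.
- rewrite -F1 -F2; apply: Dof_mono; rewrite F2; by case: (H2 _ _ E1).
- rewrite -F1 -F2; apply: Dof_mono; rewrite F1; by case: (H1 _ _ E2).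
- rewrite -K1 -K2; apply: Dof_mono; rewrite K2; by case: (H2 _ _ G1).
- rewrite -K1 -K2; apply: Dof_mono; rewrite K1; by case: (H1 _ _ G2).
Qed.

Definition mk a b :=
  pc (pc (E a) (odflt (pzero n) [pick f | (f \in S) && (f a == Some b)])) (E b).

Lemma mk_spec a b : reachb a b ->
  [/\ mk a b \in S, mk a b a = Some b & cls (mk a b) (Dof a) (Dof b)].
Proof.
move=> Hr; rewrite /mk; case: pickP => [phi /andP [Hphi /eqP Ephi]|Hno]; last first.
  by move/existsP: Hr => [f Hf]; move: (Hno f); rewrite Hf.
split.
- by rewrite !S_comp ?E_S.
- by rewrite !pcE E_x /= Ephi /= E_x.
split.
- move=> z w; rewrite !pcE.
  case Ez: (E a z) => [z'|] //=.
  have Hz := E_pid Ez; subst z'.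
  case Ep: (phi z) => [v|] //= Ev.
  have Hv := E_pid Ev; subst v.
  by rewrite /Dof !in_pdom Ez Ev.
- by exists a, b; rewrite !pcE E_x /= Ephi /= E_x.
- by exists a, b; rewrite !pcE E_x /= Ephi /= E_x.
Qed.

Section Three.
Variables x1 x2 x3 : 'I_n.
Hypothesis H12 : Dof x1 != Dof x2.
Hypothesis H13 : Dof x1 != Dof x3.
Hypothesis H23 : Dof x2 != Dof x3.

Definition botD D :=
  odflt x1 [pick b | (Dof b == D) && [forall y, (Dof y == D) ==> reachb b y]].
Definition topD D :=
  odflt x1 [pick t | (Dof t == D) && [forall y, (Dof y == D) ==> reachb y t]].

Lemma bot_spec y : Dof (botD (Dof y)) = Dof y /\
  forall z, Dof z = Dof y -> reachb (botD (Dof y)) z.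
Proof.
have [b Hb Hall] : exists2 b, b \in [set z | Dof z == Dof y] &
    forall z, z \in [set z | Dof z == Dof y] -> reachb b z.
  apply: extreme.
  - by move=> a c _ _; apply: reach_tot.
  - exact: reach_trans.
  - by apply/set0Pn; exists y; rewrite inE.
rewrite /botD; case: pickP => [b' /andP [/eqP Hb' /forallP Hall']|Hno] /=.
  by split=> // z Hz; apply: (implyP (Hall' z)); rewrite Hz.
move: Hb (Hno b); rewrite inE => Hb; rewrite /= Hb /=.
move/negbT/negP; case; apply/forallP=> z; apply/implyP=> Hz; apply: Hall.
by rewrite inE.
Qed.

Lemma top_spec y : Dof (topD (Dof y)) = Dof y /\
  forall z, Dof z = Dof y -> reachb z (topD (Dof y)).
Proof.
have [b Hb Hall] : exists2 b, b \in [set z | Dof z == Dof y] &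
    forall z, z \in [set z | Dof z == Dof y] -> (fun a c => reachb c a) b z.
  apply: extreme.
  - by move=> a c _ _; rewrite orbC; apply: reach_tot.
  - by move=> a c d H1 H2; apply: reach_trans H2 H1.
  - by apply/set0Pn; exists y; rewrite inE.
rewrite /topD; case: pickP => [b' /andP [/eqP Hb' /forallP Hall']|Hno] /=.
  by split=> // z Hz; apply: (implyP (Hall' z)); rewrite Hz.
move: Hb (Hno b); rewrite inE => Hb; rewrite /= Hb /=.
move/negbT/negP; case; apply/forallP=> z; apply/implyP=> Hz; apply: Hall.
by rewrite inE.
Qed.

Definition nextD D :=
  if D == Dof x1 then Dof x2 else if D == Dof x2 then Dof x3 else Dof x1.

Lemma next_neq D : nextD D != D.
Proof.
rewrite /nextD; case: (D =P Dof x1) => [->|N1]; first by rewrite eq_sym.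
case: (D =P Dof x2) => [->|N2]; first by rewrite eq_sym.
by rewrite eq_sym; apply/eqP.
Qed.

Lemma next2 D : nextD (nextD D) != D.
Proof.
have H21 : (Dof x2 == Dof x1) = false by apply/negbTE; rewrite eq_sym.
have H31 : (Dof x3 == Dof x1) = false by apply/negbTE; rewrite eq_sym.
have H32 : (Dof x3 == Dof x2) = false by apply/negbTE; rewrite eq_sym.
rewrite {2}/nextD; case: (D =P Dof x1) => [->|N1].
  by rewrite /nextD H21 eqxx eq_sym.
case: (D =P Dof x2) => [->|N2].
  by rewrite /nextD H31 H32.
by rewrite /nextD eqxx eq_sym; apply/eqP.
Qed.

Lemma next_blk D : exists x, Dof x = nextD D.
Proof.
rewrite /nextD; case: ifP => _; first by exists x2.
by case: ifP => _; [exists x3 | exists x1].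
Qed.

Definition alpha y := mk (botD (Dof y)) y.
Definition beta y :=
  if reachb y (topD (nextD (Dof y))) then mk y (topD (nextD (Dof y)))
  else mk (botD (nextD (Dof y))) y.

Lemma alpha_spec y : [/\ alpha y \in S, alpha y (botD (Dof y)) = Some y &
  cls (alpha y) (Dof y) (Dof y)].
Proof.
have [Hb Hr] := bot_spec y.
have [H1 H2 H3] := mk_spec (Hr y erefl).
by split=> //; rewrite -{1}Hb.
Qed.

Lemma beta_spec y : beta y \in S /\
  (if reachb y (topD (nextD (Dof y)))
   then beta y y = Some (topD (nextD (Dof y))) /\ cls (beta y) (Dof y) (nextD (Dof y))
   else beta y (botD (nextD (Dof y))) = Some y /\ cls (beta y) (nextD (Dof y)) (Dof y)).
Proof.
have [x Hx] := next_blk (Dof y).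
rewrite /beta; case: ifP => Hc.
  have [H1 H2 H3] := mk_spec Hc.
  by split=> //; split=> //; move: H3; rewrite -Hx (proj1 (top_spec x)).
have Hr : reachb (botD (nextD (Dof y))) y.
  have Ht' : reachb (topD (nextD (Dof y))) y.
    by move: (reach_tot y (topD (nextD (Dof y)))); rewrite Hc.
  apply: reach_trans Ht'; rewrite -Hx; apply: (proj2 (bot_spec x)).
  exact: (proj1 (top_spec x)).
have [H1 H2 H3] := mk_spec Hr.
by split=> //; split=> //; move: H3; rewrite -Hx (proj1 (bot_spec x)).
Qed.

Arguments alpha : simpl never.
Arguments beta : simpl never.
Arguments mk : simpl never.
Arguments botD : simpl never.
Arguments topD : simpl never.

Definition F (o : option ('I_n + 'I_n)) : pfun n :=
  match o with None => pzero n | Some (inl y) => alpha y | Some (inr y) => beta y end.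

Lemma F_in o : F o \in S.
Proof.
case: o => [[y|y]|]; cbv beta iota delta [F]; first by case: (alpha_spec y).
  by case: (beta_spec y).
exact: pzero_in x1.
Qed.

Lemma nz_alpha y : alpha y != pzero n.
Proof.
apply/eqP=> H; case: (alpha_spec y) => _ H2 _; by rewrite H ffunE in H2.
Qed.

Lemma nz_beta y : beta y != pzero n.
Proof.
apply/eqP=> H; case: (beta_spec y) => _; case: ifP => _ [H2 _];
  by rewrite H ffunE in H2.
Qed.

Lemma beta_cls y : exists D D', cls (beta y) D D' /\
   ((D = Dof y /\ D' = nextD (Dof y)) \/ (D = nextD (Dof y) /\ D' = Dof y)).
Proof.
case: (beta_spec y) => _; case: ifP => _ [_ C].
  by exists (Dof y), (nextD (Dof y)); split=> //; left.
by exists (nextD (Dof y)), (Dof y); split=> //; right.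
Qed.

Lemma F_inj : injective F.
Proof.
have nxt : forall y y', Dof y = Dof y' -> Dof y = nextD (Dof y') -> False.
  by move=> y y' E1 E2; move: (next_neq (Dof y')); rewrite -E2 E1 eqxx.
move=> [[y|y]|] [[y'|y']|] Heq; cbv beta iota delta [F] in Heq.
- case: (alpha_spec y) => _ V1 C1; case: (alpha_spec y') => _ V2 C2.
  rewrite Heq in C1 V1; have [E1 _] := cls_uniq C1 C2.
  by move: V1; rewrite E1 V2 => [[->]].
- case: (alpha_spec y) => _ _ C1; have [D [D' [C2 Hor]]] := beta_cls y'.
  rewrite Heq in C1; have [E1 E2] := cls_uniq C1 C2.
  by case: Hor => [[E3 E4]|[E3 E4]]; exfalso; apply: (nxt y y'); congruence.
- by move: (nz_alpha y); rewrite Heq eqxx.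
- case: (alpha_spec y') => _ _ C1; have [D [D' [C2 Hor]]] := beta_cls y.
  rewrite -Heq in C1; have [E1 E2] := cls_uniq C1 C2.
  by case: Hor => [[E3 E4]|[E3 E4]]; exfalso; apply: (nxt y' y); congruence.
- case: (beta_spec y) => _; case: (beta_spec y') => _.
  case: ifP => Hc'; case: ifP => Hc [V2 C2] [V1 C1]; rewrite Heq in V1 C1;
    have [E1 E2] := cls_uniq C1 C2.
  + rewrite -E1 in V2.
    by congr (Some (inr _)); apply: (pinjP (S_inj (proj1 (beta_spec y')))); rewrite ?V1 ?V2.
  + exfalso; move: (next2 (Dof y)); rewrite E1 -E2 eqxx //.
  + exfalso; move: (next2 (Dof y')); rewrite -E1 E2 eqxx //.
  + by move: V1; rewrite E1 V2 => [[->]].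
- by move: (nz_beta y); rewrite Heq eqxx.
- by move: (nz_alpha y'); rewrite -Heq eqxx.
- by move: (nz_beta y'); rewrite -Heq eqxx.
- by [].
Qed.

Lemma three_big : 2 * n < #|S|.
Proof.
have Hsub : [set F o | o in {: option ('I_n + 'I_n)}] \subset S.
  by apply/subsetP=> f /imsetP [o _ ->]; apply: F_in.
move: (subset_leq_card Hsub); rewrite card_imset; last exact: F_inj.
by rewrite card_option card_sum card_ord mul2n addnn.
Qed.

End Three.

End WithS.


Unset Implicit Arguments.
Theorem lemma2p1 (n : nat) (S : {set pfun n}) :
  2 <= n -> subsemigroup_noninv S -> semitransitive S -> #|S| <= 2 * n ->
  exists e1 e2 : pfun n,
    [/\ e1 != e2,
        [set e in S | pidem e && (e != pzero n)] = [set e1; e2],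
        [disjoint pdom e1 & pdom e2] &
        pdom e1 :|: pdom e2 = setT].
Proof.
move=> Hn HS Ht Hc.
pose x1 : 'I_n := Ordinal (leq_trans (isT : 0 < 2) Hn).
pose D := Dof HS Ht.
pose Ee := E HS Ht.
have DE : forall x, pdom (Ee x) = D x by [].
have Dx : forall x, x \in D x := Dof_x HS Ht.
have DT : forall x, D x != setT := Dof_neqT HS Ht.
have [/existsP [x2 H21] | Hall] := boolP [exists x2, D x2 != D x1]; last first.
  exfalso; move/negP: (DT x1); apply; apply/eqP/setP=> z; rewrite in_setT.
  have : D z = D x1.
    apply/eqP; apply/negPn/negP=> H; move/negP: Hall; apply.
    by apply/existsP; exists z.
  by move=> <-; apply: Dx.
have [/existsP [x3 /andP [H31 H32]] | Hno] :=
  boolP [exists x3, (D x3 != D x1) && (D x3 != D x2)].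
  have := @three_big n S HS Ht x1 x2 x3.
  rewrite -/D => H.
  have : 2 * n < #|S| by apply: H; rewrite eq_sym.
  by rewrite ltnNge Hc.
have hor : forall x, D x = D x1 \/ D x = D x2.
  move=> x; case: (D x =P D x1) => [|N1]; first by left.
  case: (D x =P D x2) => [|N2]; first by right.
  exfalso; move/negP: Hno; apply; apply/existsP; exists x.
  by apply/andP; split; apply/eqP.
have Hperm : forall g, g \in S -> pdom g = setT -> False.
  move=> g Hg Hd; move/negP: (S_np HS Hg); apply; apply: total_perm => //.
  exact (S_inj HS Hg).
have claim : forall g z, g \in S -> pid g -> g z != None -> pdom g = D z.
  move=> g z Hg Hpg Hgz; apply/eqP; rewrite eqEsubset; apply/andP; split; last first.
    exact: Dof_sub.
  apply/subsetP=> w Hw; apply/negPn/negP=> Hwz; exfalso; apply: (Hperm g Hg).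
  have Hsw : D w \subset pdom g by apply: Dof_sub; rewrite // -in_pdom.
  have Hsz : D z \subset pdom g by apply: Dof_sub.
  have Hne : D w <> D z by move=> E1; move: Hwz; rewrite -E1 Dx.
  apply/setP=> u; rewrite in_setT.
  have : D u = D w \/ D u = D z.
    by case: (hor u); case: (hor w); case: (hor z); move=> *; 
       first [left; congruence | right; congruence | exfalso; congruence].
  case=> Eu.
    by apply: (subsetP Hsw); rewrite -Eu Dx.
  by apply: (subsetP Hsz); rewrite -Eu Dx.
have cover : forall z, z \in D x1 \/ z \in D x2.
  by move=> z; case: (hor z) => <-; [left|right].
exists (Ee x1), (Ee x2); split.
- by apply/eqP=> H; move: H21; rewrite /D -/(Dof HS Ht x1) /Dof -/Ee -H eqxx.
- apply/setP=> g; rewrite !inE; apply/idP/idP.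
    move=> /and3P [Hg Hid Hnz].
    have Hpg : pid g by apply: idem_pid => //; exact (S_inj HS Hg).
    have [z Hz] : exists z, g z != None.
      case: (boolP [exists z, g z != None]) => [/existsP //|H].
      exfalso; move/negP: Hnz; apply; apply/eqP/pzeroP=> z.
      by apply/eqP; apply/negPn/negP=> Hz; move/negP: H; apply; apply/existsP; exists z.
    have Hd := claim g z Hg Hpg Hz.
    case: (hor z) => Ez.
      by apply/orP; left; apply/eqP; apply: pid_eq => //; [exact: E_pid | rewrite Hd Ez].
    by apply/orP; right; apply/eqP; apply: pid_eq => //; [exact: E_pid | rewrite Hd Ez].
  move=> /orP [] /eqP ->; rewrite (E_S HS Ht) pid_idem /=; try exact: E_pid.
    by apply/eqP=> H; move: (E_x HS Ht x1); rewrite -/Ee H ffunE.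
  by apply/eqP=> H; move: (E_x HS Ht x2); rewrite -/Ee H ffunE.
- rewrite disjoints_subset; apply/subsetP=> z Hz1; rewrite inE; apply/negP=> Hz2.
  rewrite DE in Hz1 Hz2.
  have M1 : D z \subset D x1 := Dof_mono Hz1.
  have M2 : D z \subset D x2 := Dof_mono Hz2.
  case: (hor z) => Ez; rewrite Ez in M1 M2.
    move/negP: (DT x2); apply; apply/eqP/setP=> u; rewrite in_setT.
    by case: (cover u) => // H; apply: (subsetP M2).
  move/negP: (DT x1); apply; apply/eqP/setP=> u; rewrite in_setT.
  by case: (cover u) => // H; apply: (subsetP M1).
- apply/setP=> z; rewrite in_setU in_setT !DE; by case: (cover z) => ->; rewrite ?orbT.
Qed.
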